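(* Let $m\ge1$, $N=2^m$, let $\mathcal{A}\subseteq[0,N-1]$ with $\mathcal{A}$ and $\mathcal{A}^c=[0,N-1]\setminus\mathcal{A}$ nonempty, and let $\mathbf{P}\in\mathbb{F}_2^{N\times N}$ be upper triangular with unit diagonal. Then $$\mathcal{C}_{\boldsymbol{G}_N}([\max(\mathcal{A}^c)+1,N-1])\subseteq\mathcal{C}_{\mathbf{P}\boldsymbol{G}_N}(\mathcal{A})\subseteq\mathcal{C}_{\boldsymbol{G}_N}([\min(\mathcal{A}),N-1]),$$ and $$\mathcal{C}_{\boldsymbol{G}_N}([N-\min(\mathcal{A}),N-1])\subseteq\mathcal{C}_{\mathbf{P}\boldsymbol{G}_N}(\mathcal{A})^{\perp}\subseteq\mathcal{C}_{\boldsymbol{G}_N}([N-1-\max(\mathcal{A}^c),N-1]).$$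
   Context: $[\ell,u]=\{\ell,\dots,u\}$ (empty if $\ell>u$). $\boldsymbol{G}_N=\begin{pmatrix}1&0\\1&1\end{pmatrix}^{\otimes m}$ over $\mathbb{F}_2$, rows/columns indexed by $0,\dots,N-1$; $\mathcal{C}_{\mathbf{B}}(\mathcal{S})$ is the code spanned by the rows of $\mathbf{B}$ indexed by $\mathcal{S}$. $\perp$ is the dual code for the standard inner product over $\mathbb{F}_2$. *)

(* Defs.v *)
From mathcomp Require Import all_boot all_algebra.
Set Implicit Arguments. Unset Strict Implicit. Unset Printing Implicit Defensive.
Import GRing.Theory.
Local Open Scope ring_scope.

(* Kernel F = [[1,0],[1,1]] over F_2, indexed by bits (row bit, column bit). *)
Definition Fker (a b : bool) : 'F_2 := if ~~ a && b then 0 else 1.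

(* G_N = F^{\otimes m}, N = 2^m: the (i,j) entry of a Kronecker power is the
   product of the kernel entries at the binary digits of i and j. *)
Definition polarG (m : nat) : 'M['F_2]_(2 ^ m) :=
  \matrix_(i, j) \prod_(k < m) Fker (odd (i %/ 2 ^ k)) (odd (j %/ 2 ^ k)).

Definition code (n : nat) (B : 'M['F_2]_n) (S : {set 'I_n}) : 'rV['F_2]_n -> Prop :=
  fun x => exists c : 'I_n -> 'F_2, x = \sum_(i in S) c i *: row i B.

Definition dual (n : nat) (C : 'rV['F_2]_n -> Prop) : 'rV['F_2]_n -> Prop :=
  fun x => forall y, C y -> x *m y^T = 0.

Definition subcode (n : nat) (C D : 'rV['F_2]_n -> Prop) : Prop :=
  forall x, C x -> D x.

Definition from_idx (n l : nat) : {set 'I_n} := [set i : 'I_n | l <= i]%N.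

Definition upper_unitriangular (n : nat) (P : 'M['F_2]_n) : Prop :=
  (forall i j : 'I_n, (j < i)%N -> P i j = 0) /\ (forall i : 'I_n, P i i = 1).

(* Main.v *)
Require Import Defs.
From mathcomp Require Import all_boot all_algebra zify.
Set Implicit Arguments. Unset Strict Implicit. Unset Printing Implicit Defensive.
Import GRing.Theory.
From mathcomp Require Import zify.

Definition bit (t n : nat) : bool := odd (n %/ 2 ^ t).

Lemma bit0 n : bit 0 n = odd n.
Proof. by rewrite /bit expn0 divn1. Qed.

Lemma bitS t n : bit t.+1 n = bit t n./2.
Proof. by rewrite /bit expnS divnMA -divn2. Qed.

Lemma halfS2 n : n = odd n + (n./2).*2.
Proof. by rewrite odd_double_half. Qed.

Lemma bit_sub m : forall i j, (i < 2 ^ m)%N -> (j < 2 ^ m)%N ->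
  (forall t, (t < m)%N -> bit t j -> bit t i) -> (j <= i)%N.
Proof.
elim: m => [|m IH] i j.
  by rewrite expn0 !ltnS !leqn0 => /eqP-> /eqP->.
move=> hi hj hb.
have h2 : (j./2 <= i./2)%N.
  apply: IH.
  - by rewrite -divn2 ltn_divLR // -expnSr.
  - by rewrite -divn2 ltn_divLR // -expnSr.
  by move=> t ht; rewrite -!bitS; apply: hb.
have ho : (odd j <= odd i)%N.
  move: (hb 0%N isT); rewrite !bit0; case: (odd j) => //= -> //.
rewrite (halfS2 j) (halfS2 i); apply: leq_add => //; by rewrite leq_double.
Qed.

Lemma bit_disj m : forall i k, (i < 2 ^ m)%N -> (k < 2 ^ m)%N ->
  (forall t, (t < m)%N -> ~~ (bit t i && bit t k)) -> (i + k < 2 ^ m)%N.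
Proof.
elim: m => [|m IH] i k.
  by rewrite expn0 !ltnS !leqn0 => /eqP-> /eqP->.
move=> hi hk hb.
have h2 : (i./2 + k./2 < 2 ^ m)%N.
  apply: IH.
  - by rewrite -divn2 ltn_divLR // -expnSr.
  - by rewrite -divn2 ltn_divLR // -expnSr.
  by move=> t ht; rewrite -!bitS; apply: hb.
have ho : (odd i + odd k <= 1)%N.
  by move: (hb 0%N isT); rewrite !bit0; case: (odd i); case: (odd k).
rewrite expnS; move: h2 ho; have := halfS2 i; have := halfS2 k.
rewrite -!mul2n; lia.
Qed.

Lemma bit_comp m : forall i k, (i + k = (2 ^ m).-1)%N ->
  forall t, (t < m)%N -> ~~ (bit t i && bit t k).
Proof.
elim: m => [|m IH] i k // hik t ht.
have hodd : odd i (+) odd k.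
  have : odd (i + k) by rewrite hik expnS -subn1 oddB ?muln_gt0 ?expn_gt0 // oddM.
  by rewrite oddD.
case: t ht => [|t] ht.
  by rewrite !bit0; move: hodd; case: (odd i); case: (odd k).
rewrite !bitS; apply: (IH) => //.
move: hik; have := halfS2 i; have := halfS2 k; rewrite expnS -!mul2n.
have := expn_gt0 2 m.
move: hodd; case: (odd i); case: (odd k) => //= _; lia.
Qed.

Lemma bit_lo m j t : (j < 2 ^ m)%N -> (t < m)%N -> bit t (2 ^ m + j) = bit t j.
Proof.
move=> hj ht; rewrite /bit.
have -> : (2 ^ m = 2 ^ (m - t) * 2 ^ t)%N by rewrite -expnD subnK // ltnW.
rewrite divnMDl ?expn_gt0 // oddD oddX /=.
by have -> : (m - t == 0)%N = false by apply/negbTE; rewrite subn_eq0 -ltnNge.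
Qed.

Lemma bit_hi0 m j : (j < 2 ^ m)%N -> bit m j = false.
Proof. by move=> hj; rewrite /bit divn_small. Qed.

Lemma bit_hi1 m j : (j < 2 ^ m)%N -> bit m (2 ^ m + j) = true.
Proof.
move=> hj; rewrite /bit -{1}[(2 ^ m)%N]mul1n divnMDl ?expn_gt0 // divn_small //.
Qed.

Local Open Scope ring_scope.

Lemma sum_prod_bits (R : comNzRingType) m (f : nat -> bool -> R) :
  \sum_(j < 2 ^ m) \prod_(t < m) f t (bit t j) =
  \prod_(t < m) (f t false + f t true).
Proof.
elim: m => [|m IH].
  by rewrite expn0 big_ord1 !big_ord0.
rewrite big_ord_recr /= -IH mulrDr !mulr_suml /=.
rewrite -(big_mkord xpredT (fun j => \prod_(t < m.+1) f t (bit t j))).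
rewrite expnS mul2n -addnn (big_cat_nat _ (n := (2 ^ m)%N)) //= ?leq_addr //.
set F := (fun i => \prod_(t < m.+1) f t (bit t i)).
have -> : \sum_(2 ^ m <= i < 2 ^ m + 2 ^ m) F i = \sum_(0 <= i < 2 ^ m) F (i + 2 ^ m)%N.
  by rewrite -{1}[(2 ^ m)%N]add0n big_addn addnK.
rewrite !big_mkord /F.
congr (_ + _).
  apply: eq_bigr => j _.
  rewrite big_ord_recr /= bit_hi0 //; congr (_ * _).
apply: eq_bigr => j _.
rewrite big_ord_recr /= addnC bit_hi1 //; congr (_ * _).
by apply: eq_bigr => t _; rewrite bit_lo.
Qed.
Local Open Scope ring_scope.

Lemma two_F2 : (1 + 1 : 'F_2) = 0.
Proof. by apply/eqP. Qed.

Lemma G_lower m (i j : 'I_(2 ^ m)) : (i < j)%N -> polarG m i j = 0.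
Proof.
move=> hij; rewrite mxE.
case: (boolP [forall t : 'I_m, bit t j ==> bit t i]) => [/forallP H|].
  have := @bit_sub m i j (ltn_ord i) (ltn_ord j).
  have H' : forall t, (t < m)%N -> bit t j -> bit t i.
    by move=> t ht; have := H (Ordinal ht); move/implyP.
  by move=> /(_ H'); rewrite leqNgt hij.
rewrite negb_forall => /existsP [t]; rewrite negb_imply => /andP [hj hi].
rewrite (bigD1 t) //= /Fker -/(bit t i) -/(bit t j) hi hj /= mul0r //.
Qed.

Lemma G_diag m (i : 'I_(2 ^ m)) : polarG m i i = 1.
Proof. by rewrite mxE big1 // => t _; rewrite /Fker; case: odd. Qed.

Lemma GGt m (i k : 'I_(2 ^ m)) :
  (polarG m *m (polarG m)^T) i k = \prod_(t < m) (1 + (bit t i && bit t k)%:R).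
Proof.
rewrite mxE.
have -> : \sum_j polarG m i j * (polarG m)^T j k =
   \sum_(j < 2 ^ m) \prod_(t < m) (fun t b => Fker (bit t i) b * Fker (bit t k) b) t (bit t j).
  by apply: eq_bigr => j _; rewrite !mxE -big_split.
rewrite (@sum_prod_bits _ m (fun t b => Fker (bit t i) b * Fker (bit t k) b)); apply: eq_bigr => t _ /=.
rewrite /Fker; case: (bit t i); case: (bit t k) => /=; rewrite ?mulr1 ?mulr0 ?addr0 // two_F2.
Qed.

Lemma GGt0 m (i k : 'I_(2 ^ m)) : (2 ^ m <= i + k)%N ->
  (polarG m *m (polarG m)^T) i k = 0.
Proof.
move=> h; rewrite GGt.
case: (boolP [forall t : 'I_m, ~~ (bit t i && bit t k)]) => [/forallP H|].
  have := @bit_disj m i k (ltn_ord i) (ltn_ord k).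
  have H' : forall t, (t < m)%N -> ~~ (bit t i && bit t k).
    by move=> t ht; have := H (Ordinal ht).
  by move=> /(_ H'); rewrite ltnNge h.
rewrite negb_forall => /existsP [t]; rewrite negbK => hb.
by rewrite (bigD1 t) //= hb two_F2 mul0r.
Qed.

Lemma GGt1 m (i k : 'I_(2 ^ m)) : (i + k = (2 ^ m).-1)%N ->
  (polarG m *m (polarG m)^T) i k = 1.
Proof.
move=> h; rewrite GGt big1 // => t _.
by have := @bit_comp m i k h t (ltn_ord t); case: (_ && _) => //= _; rewrite addr0.
Qed.
Local Open Scope ring_scope.

Lemma code_mx n (B : 'M['F_2]_n) S x : code B S x <->
  exists v : 'rV_n, (forall k, k \notin S -> v 0 k = 0) /\ x = v *m B.
Proof.
split.
  move=> [c ->]; exists (\row_k (if k \in S then c k else 0)); split.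
    by move=> k hk; rewrite mxE (negbTE hk).
  rewrite mulmx_sum_row [RHS](bigID (mem S)) /= [X in _ = _ + X]big1 ?addr0.
    by apply: eq_bigr => i hi; rewrite mxE hi.
  by move=> i /negbTE hi; rewrite mxE hi scale0r.
move=> [v [hv ->]]; exists (fun k => v 0 k).
rewrite mulmx_sum_row [LHS](bigID (mem S)) /= [X in _ + X = _]big1 ?addr0 //.
by move=> i hi; rewrite hv ?scale0r.
Qed.

Lemma tri_zero n (T : 'M['F_2]_n) (v : 'rV_n) l :
  (forall i j : 'I_n, (j < i)%N -> T i j = 0) -> (forall i, T i i = 1) ->
  (forall k : 'I_n, (k < l)%N -> (v *m T) 0 k = 0) ->
  forall k : 'I_n, (k < l)%N -> v 0 k = 0.
Proof.
move=> hT h1 hv.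
suff H : forall p (k : 'I_n), (k < p)%N -> (k < l)%N -> v 0 k = 0.
  move=> k hk; apply: (H k.+1 k _ hk); exact: ltnSn.
elim=> [//|p IH] k hkp hkl.
case: (ltnP k p) => hk; first exact: IH.
have ekp : nat_of_ord k = p by apply/eqP; rewrite eqn_leq hk -ltnS hkp.
have := hv k hkl; rewrite mxE (bigD1 k) //= h1 mulr1 big1 ?addr0 // => i hik.
case: (ltngtP i k) => h.
- have hi1 : (i < p)%N by rewrite -ekp.
  have hi2 : (i < l)%N by exact: ltn_trans h hkl.
  by rewrite (IH i hi1 hi2) mul0r.
- by rewrite hT ?mulr0.
- by move: hik; rewrite -(inj_eq val_inj) /= h eqxx.
Qed.

Lemma tri_unit n (T : 'M['F_2]_n) :
  (forall i j : 'I_n, (j < i)%N -> T i j = 0) -> (forall i, T i i = 1) ->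
  T \in unitmx.
Proof.
move=> hT h1; rewrite unitmxE -det_tr det_trig.
  by rewrite big1 ?unitr1 // => i _; rewrite mxE h1.
by apply/is_trig_mxP => i j hij; rewrite mxE hT.
Qed.
Local Open Scope ring_scope.

Theorem proposition4 (m : nat) (A : {set 'I_(2 ^ m)}) (P : 'M['F_2]_(2 ^ m))
  (a b : nat) :
  (1 <= m)%N ->
  A != set0 -> ~: A != set0 ->
  (exists2 i : 'I_(2 ^ m), i \in A & nat_of_ord i = a) ->
  (forall i : 'I_(2 ^ m), i \in A -> (a <= i)%N) ->
  (exists2 i : 'I_(2 ^ m), i \in ~: A & nat_of_ord i = b) ->
  (forall i : 'I_(2 ^ m), i \in ~: A -> (i <= b)%N) ->
  upper_unitriangular P ->
  [/\ subcode (code (polarG m) (from_idx (2 ^ m) b.+1)) (code (P *m polarG m) A),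
      subcode (code (P *m polarG m) A) (code (polarG m) (from_idx (2 ^ m) a)),
      subcode (code (polarG m) (from_idx (2 ^ m) (2 ^ m - a)))
              (dual (code (P *m polarG m) A))
    & subcode (dual (code (P *m polarG m) A))
              (code (polarG m) (from_idx (2 ^ m) (2 ^ m - 1 - b)))].
Proof.
move=> _ _ _ [ia iaA iaE] hA [ib ibA ibE] hB [hPl hP1].
set N := (2 ^ m)%N.
set G := polarG m.
have notin_from : forall l (k : 'I_N), (k \notin from_idx N l) = (k < l)%N.
  by move=> l k; rewrite /from_idx inE -ltnNge.
have c1 : subcode (code G (from_idx N b.+1)) (code (P *m G) A).
  move=> x /code_mx [w [hw ->]]; apply/code_mx.
  have uP : P \in unitmx by apply: tri_unit.
  exists (w *m invmx P); split; last by rewrite mulmxA mulmxKV.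
  move=> k hk.
  have hkb : (k < b.+1)%N by rewrite ltnS; apply: hB; rewrite inE.
  apply: (tri_zero hPl hP1 _ hkb) => j hj.
  by rewrite mulmxKV // hw // notin_from.
have c2 : forall x, code (P *m G) A x ->
    exists u : 'rV_N, (forall k : 'I_N, (k < a)%N -> u 0 k = 0) /\ x = u *m G.
  move=> x /code_mx [v [hv ->]]; exists (v *m P); split; last by rewrite mulmxA.
  move=> k hk; rewrite mxE big1 // => i _.
  case: (boolP (i \in A)) => hi; last by rewrite hv ?mul0r.
  by rewrite hPl ?mulr0 // (leq_trans hk) // hA.
split => //.
- move=> x /c2 [u [hu ->]]; apply/code_mx; exists u; split => // k.
  by rewrite notin_from; apply: hu.
- move=> x /code_mx [v [hv ->]] y /c2 [u [hu ->]].
  rewrite trmx_mul mulmxA -(mulmxA v).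
  set M := G *m G^T.
  have hvM : forall k : 'I_N, (a <= k)%N -> (v *m M) 0 k = 0.
    move=> k hk; rewrite mxE big1 // => i _.
    case: (ltnP i (N - a)) => hi; first by rewrite hv ?mul0r // notin_from.
    rewrite /M GGt0 ?mulr0 //.
    have := ltn_ord i; have := ltn_ord k; rewrite -/N; lia.
  apply/matrixP => i j; rewrite [LHS]mxE [RHS]mxE big1 // => k _.
  case: (ltnP k a) => hk; rewrite !ord1; first by rewrite [u^T _ _]mxE hu ?mulr0.
  by rewrite hvM ?mul0r.
- move=> x hx.
  have uG : G \in unitmx.
    rewrite -unitmx_tr; apply: tri_unit => [i j hij|i].
      by rewrite mxE /G G_lower.
    by rewrite mxE G_diag.
  set y := x *m invmx G.
  have xE : x = y *m G by rewrite /y mulmxKV.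
  apply/code_mx; exists y; split => //.
  have hrow : forall k : 'I_N, (b < k)%N -> (x *m G^T) 0 k = 0.
    move=> k hk.
    have hc : code (P *m G) A (row k G).
      apply: c1; apply/code_mx; exists (delta_mx 0 k); split; last by rewrite -rowE.
      move=> j; rewrite notin_from => hj; rewrite mxE /=.
      case: eqP => // ejk; move: hj; rewrite ejk ltnS leqNgt hk.
      by [].
    have e := hx _ hc.
    transitivity ((x *m (row k G)^T) 0 0); last by rewrite e mxE.
    by rewrite !mxE; apply: eq_bigr => i _; rewrite !mxE.
  set M := G *m G^T.
  set T := \matrix_(i, j) M i (rev_ord j).
  have hT : forall i j : 'I_N, (j < i)%N -> T i j = 0.
    move=> i j hij; rewrite mxE /M GGt0 //=.
    have := ltn_ord i; have := ltn_ord j; rewrite -/N; lia.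
  have hT1 : forall i : 'I_N, T i i = 1.
    move=> i; rewrite mxE /M GGt1 //=.
    have := ltn_ord i; rewrite -/N; lia.
  move=> k; rewrite notin_from => hk.
  apply: (tri_zero hT hT1 _ hk) => j hj.
  have -> : (y *m T) 0 j = (y *m M) 0 (rev_ord j).
    by rewrite !mxE; apply: eq_bigr => i _; rewrite /T mxE.
  rewrite /M mulmxA -xE hrow //=.
  have := ltn_ord j; rewrite -/N; lia.
Qed.
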